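(* Let $t$ be the Thue-Morse word. For every occurrence $t(i..j]$ in $t$ of a palindrome of positive length $j-i\notin\{1,3\}$, there is $m\in\{0,1,2,3\}$ such that $i\equiv m \pmod 4$ and $j\equiv 4-m \pmod 4$; equivalently, $i+j\equiv 0 \pmod 4$.
   Context: The Thue-Morse word $t=t[1]t[2]\cdots=abbabaabbaababba\cdots$ is the fixed point starting with $a$ of the morphism $\tau: a\mapsto abba,\ b\mapsto baab$. For $0\le i\le j$, $t(i..j]$ denotes the factor $t[i+1]t[i+2]\cdots t[j]$. A palindrome is a word $p=p[1]\cdots p[n]$ with $p[i]=p[n-i+1]$ for all $i$. *)

(* Defs.v *)
From mathcomp Require Import all_boot.
Set Implicit Arguments. Unset Strict Implicit. Unset Printing Implicit Defensive.

Definition letter := bool.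
Definition la : letter := false.
Definition lb : letter := true.

Definition tau1 (x : letter) : seq letter :=
  if x then [:: lb; la; la; lb] else [:: la; lb; lb; la].
Definition tau (w : seq letter) : seq letter := flatten (map tau1 w).

Definition tau_iter (k : nat) : seq letter := iter k tau [:: la].

(* The Thue-Morse word t = t[1] t[2] ..., 1-indexed: the fixed point of tau
   starting with a.  t[n] is read off tau^n(a), which has length 4^n >= n.
   (t[0] is unused.) *)
Definition tmw (n : nat) : letter := nth la (tau_iter n) n.-1.

(* The factor t(i..j] = t[i+1] ... t[j]. *)
Definition factor (i j : nat) : seq letter := [seq tmw k | k <- iota i.+1 (j - i)].

Definition palindrome (p : seq letter) : bool := p == rev p.

(* Main.v *)
Require Import Defs.
From mathcomp Require Import all_boot.
From mathcomp Require Import zify.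

Lemma size_tau1 x : size (tau1 x) = 4. Proof. by case: x. Qed.

Lemma tau_cat u v : tau (u ++ v) = tau u ++ tau v.
Proof. by rewrite /tau map_cat flatten_cat. Qed.

Lemma tau_cons x w : tau (x :: w) = tau1 x ++ tau w.
Proof. by []. Qed.

Lemma size_tau w : size (tau w) = 4 * size w.
Proof.
elim: w => [|x w IH] //; rewrite tau_cons size_cat size_tau1 IH /=; lia.
Qed.

Lemma size_tau_iter k : size (tau_iter k) = 4 ^ k.
Proof.
elim: k => [|k IH] //; rewrite /tau_iter iterS -/(tau_iter k) size_tau IH expnS //.
Qed.

Lemma tau_iterS k : tau_iter k.+1 = tau (tau_iter k).
Proof. by rewrite /tau_iter iterS. Qed.

Lemma tau_iter_prefix k : exists s, tau_iter k.+1 = tau_iter k ++ s.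
Proof.
elim: k => [|k IH]; first by exists [:: lb; lb; la]; rewrite /tau_iter /= /tau /=.
case: IH => s Hs.
exists (tau s); rewrite [tau_iter k.+2]tau_iterS Hs tau_cat -tau_iterS Hs //.
Qed.

Lemma stab k d m : m < 4 ^ k -> nth la (tau_iter (k + d)) m = nth la (tau_iter k) m.
Proof.
move=> Hm; elim: d => [|d IH]; first by rewrite addn0.
have [s Hs] := tau_iter_prefix (k + d).
rewrite addnS Hs nth_cat size_tau_iter.
rewrite (leq_trans Hm) ?leq_pexp2l ?leq_addr //.
Qed.

Lemma stab2 k k' m : m < 4 ^ k -> m < 4 ^ k' -> nth la (tau_iter k') m = nth la (tau_iter k) m.
Proof.
move=> H1 H2; case: (leqP k k') => H.
  by rewrite -(subnKC H) stab.
by rewrite -(subnKC (ltnW H)) stab.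
Qed.

Definition T m := nth la (tau_iter m) m.

Lemma ltexp m : m < 4 ^ m.
Proof. by apply: ltn_expl. Qed.

Lemma T_K k m : m < 4 ^ k -> nth la (tau_iter k) m = T m.
Proof. move=> H; rewrite /T; apply: stab2 => //; exact: ltexp. Qed.

Lemma nth_tau w q r : q < size w -> r < 4 ->
  nth la (tau w) (4 * q + r) = nth la (tau1 (nth la w q)) r.
Proof.
elim: w q => [|x w IH] [|q] //= Hq Hr; rewrite tau_cons nth_cat size_tau1.
  by rewrite muln0 add0n Hr.
have -> : (4 * q.+1 + r < 4) = false by lia.
have -> : 4 * q.+1 + r - 4 = 4 * q + r by lia.
exact: IH.
Qed.

Lemma TB q r : r < 4 -> T (4 * q + r) = nth la (tau1 (T q)) r.
Proof.
move=> Hr.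
rewrite -(@T_K q.+1); last first.
  rewrite expnS; have := ltexp q; lia.
rewrite tau_iterS nth_tau ?size_tau_iter ?ltexp // T_K // ltexp.
Qed.

Lemma blk q : T (4*q+1) = ~~ T (4*q) /\ T (4*q+2) = ~~ T (4*q) /\ T (4*q+3) = T (4*q).
Proof.
have H0 : T (4*q) = nth la (tau1 (T q)) 0 by rewrite -TB // addn0.
rewrite !TB // H0; by case: (T q).
Qed.

Lemma tmwT n : tmw n.+1 = T n.
Proof. rewrite /tmw; apply: (@T_K n.+1); rewrite expnS; have := ltexp n; lia. Qed.

Lemma nth_factor i j k : k < j - i -> nth la (factor i j) k = T (i + k).
Proof.
move=> Hk; rewrite /factor (nth_map 0) ?size_iota // nth_iota // -tmwT; congr tmw; lia.
Qed.

Lemma pal_T i j k : i < j -> palindrome (factor i j) -> k < j - i ->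
  T (i + k) = T (i + (j - i - k.+1)).
Proof.
move=> Hij /eqP Hp Hk.
have Hs : size (factor i j) = j - i by rewrite /factor size_map size_iota.
rewrite -(@nth_factor i j) // {1}Hp nth_rev ?Hs // nth_factor //; lia.
Qed.

Lemma F1 c : c %% 2 = 0 -> T c != T c.+1.
Proof.
move=> Hc.
have [q [E|E]] : exists q, c = 4 * q \/ c = 4 * q + 2.
  exists (c %/ 4); lia.
- have [H1 [H2 H3]] := blk q.
  have -> : c.+1 = 4*q+1 by lia.
  rewrite E H1; by case: (T (4*q)).
- have [H1 [H2 H3]] := blk q.
  have -> : c.+1 = 4*q+3 by lia.
  rewrite E H2 H3; by case: (T (4*q)).
Qed.

Lemma F5 c : 2 <= c -> T c.-1 = T c.+1 -> T (c - 2) = T (c + 2) -> False.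
Proof.
move=> Hc.
have [q [r [Hr E]]] : exists q r, r < 4 /\ c = 4 * q + r.
  exists (c %/ 4), (c %% 4); lia.
case: r Hr E => [|[|[|[|r]]]] // _ E.
- have Hq : q = (q - 1).+1 by lia.
  have [H1 [H2 H3]] := blk q.
  have [G1 [G2 G3]] := blk (q - 1).
  have -> : c.-1 = 4 * (q-1) + 3 by lia.
  have -> : c.+1 = 4 * q + 1 by lia.
  have -> : c - 2 = 4 * (q-1) + 2 by lia.
  have -> : c + 2 = 4 * q + 2 by lia.
  rewrite H1 H2 G2 G3.
  case: (T (4*q)) ; case: (T (4*(q-1))) => //=.
- have [H1 [H2 H3]] := blk q.
  have -> : c.-1 = 4 * q by lia.
  have -> : c.+1 = 4 * q + 2 by lia.
  rewrite H2; by case: (T (4*q)).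
- have [H1 [H2 H3]] := blk q.
  have -> : c.-1 = 4 * q + 1 by lia.
  have -> : c.+1 = 4 * q + 3 by lia.
  rewrite H1 H3; by case: (T (4*q)).
- have [H1 [H2 H3]] := blk q.
  have [G1 [G2 G3]] := blk q.+1.
  have -> : c.-1 = 4 * q + 2 by lia.
  have -> : c.+1 = 4 * q.+1 by lia.
  have -> : c - 2 = 4 * q + 1 by lia.
  have -> : c + 2 = 4 * q.+1 + 1 by lia.
  rewrite H1 H2 G1; case: (T (4*q)); case: (T (4*q.+1)) => //=.
Qed.

Theorem proposition5 (i j : nat) :
  i < j -> j - i != 1 -> j - i != 3 ->
  palindrome (factor i j) ->
  exists2 m : nat, m < 4 & (i = m %[mod 4]) /\ (j = 4 - m %[mod 4]).
Proof.
move=> Hij /eqP H1 /eqP H3 Hp.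
suff S : (i + j) %% 4 = 0.
  exists (i %% 4); first by rewrite ltn_mod.
  split; first by rewrite modn_mod.
  lia.
have [h [E|E]] : exists h, j - i = 2 * h \/ j - i = 2 * h + 1.
  exists ((j - i) %/ 2); lia.
- have Hh : 0 < h by lia.
  have P := @pal_T i j h.-1 Hij Hp.
  have F := F1 (i + h.-1).
  case: (boolP ((i + h.-1) %% 2 == 0)) => [/eqP C|C]; last by lia.
  exfalso; move/negP: (F C); apply.
  rewrite P; last by lia.
  apply/eqP; congr T; lia.
- have Hh : 2 <= h by lia.
  have P1 := @pal_T i j h.-1 Hij Hp.
  have P2 := @pal_T i j (h - 2) Hij Hp.
  exfalso; apply: (@F5 (i + h)); first by lia.
  + rewrite (_ : (i + h).-1 = i + h.-1); last by lia.
    rewrite P1; last by lia. congr T; lia.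
  + rewrite (_ : i + h - 2 = i + (h - 2)); last by lia.
    rewrite P2; last by lia. congr T; lia.
Qed.
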